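(* Let $(X,G)$ be an association scheme. Assume there exist $c,k,\ell\in\mathbb{N}$ and real numbers $0<\delta_1,\delta'_1,\delta'_2\leq 1$ with $1<\ell<(\delta_1^2/\delta'_1)\cdot k$ such that for all $g\in G$ with $g\neq 1$, \[\delta_1 k\leq n_g\leq \delta'_1 k \quad\text{and}\quad c(g)\leq \delta'_2 c.\] If $|G|\geq 2(\delta'_1/\delta_1)^3\delta'_2\cdot\frac{c}{\ell-1}+2$, then there exist relations $u,v,w,w'\in G\setminus\{1\}$ with $u\neq v$ and $w\neq w'$ such that $0<c^{w}_{u^{*}v}\leq c^{w'}_{u^{*}v}<\ell$.
   Context: An association scheme is a pair $(X,G)$ where $X$ is a finite set and $G$ is a partition of $X\times X$ such that (1) $G$ contains the identity relation $1:=\{(x,x)\mid x\in X\}$; (2) if $g\in G$ then $g^{*}:=\{(y,x)\mid (x,y)\in g\}\in G$; (3) for all $f,g,h\in G$ there is an integer $c^{h}_{fg}$ (intersection number) such that for all $(\alpha,\beta)\in h$, $c^{h}_{fg}=\#\{\gamma\in X\mid (\alpha,\gamma)\in f,\ (\gamma,\beta)\in g\}$. Elements of $G$ are called relations. For $g\in G$, its valency is $n_g:=c^{1}_{gg^{*}}$ and its indistinguishing number is $c(g):=\sum_{v\in G}c^{g}_{vv^{*}}$. *)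

(* Defs.v *)
From HB Require Import structures.
From mathcomp Require Import all_boot all_order all_algebra.
Set Implicit Arguments. Unset Strict Implicit. Unset Printing Implicit Defensive.

(* An association scheme (X,G) is encoded by:
   - X : finType (the point set),
   - I : finType indexing the relations of G,
   - r : X -> X -> I, with r x y = the relation containing (x,y);
     the relations are the nonempty fibres of r (surjectivity => every
     index is a genuine nonempty relation, so G = partition of X*X, |G| = #|I|),
   - one : I, the index of the identity relation 1,
   - star : I -> I, g |-> g^*. *)
Definition is_assoc_scheme (X I : finType) (r : X -> X -> I) (one : I)
    (star : I -> I) : Prop :=
  [/\ (forall i : I, exists x y, r x y = i),
      (forall x y : X, (r x y == one) = (x == y)),
      (forall x y : X, r y x = star (r x y)) &
      (forall (f g h : I) (a b a' b' : X), r a b = h -> r a' b' = h ->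
         #|[set z | (r a z == f) && (r z b == g)]| =
         #|[set z | (r a' z == f) && (r z b' == g)]|)].

(* intersection number c^h_{fg}, computed at some (alpha,beta) in h *)
Definition inum (X I : finType) (r : X -> X -> I) (h f g : I) : nat :=
  match [pick p : X * X | r p.1 p.2 == h] with
  | Some p => #|[set z | (r p.1 z == f) && (r z p.2 == g)]|
  | None => 0
  end.

Definition valency (X I : finType) (r : X -> X -> I) (one : I) (star : I -> I)
    (g : I) : nat := inum r one g (star g).

Definition indist (X I : finType) (r : X -> X -> I) (star : I -> I) (g : I) : nat :=
  \sum_(v : I) inum r g v (star v).

(* Main.v *)
Require Import Defs.
From HB Require Import structures.
From mathcomp Require Import all_boot all_order all_algebra.
From mathcomp Require Import ring lra.
From Stdlib Require Import Classical.
Import Order.TTheory GRing.Theory Num.Theory.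
Set Implicit Arguments. Unset Strict Implicit. Unset Printing Implicit Defensive.

Lemma card_sumP (T : finType) (P : pred T) : #|[set z | P z]| = \sum_z (P z : nat).
Proof.
rewrite cardsE -sum1_card big_mkcond /=; apply: eq_bigr => z _.
by rewrite unfold_in; case: (P z).
Qed.

Lemma starK (X I : finType) (r : X -> X -> I) one star :
  is_assoc_scheme r one star -> forall i, star (star i) = i.
Proof.
case=> Hs _ Hst _ i; have [x [y <-]] := Hs i.
by rewrite -!Hst.
Qed.

Lemma inumE (X I : finType) (r : X -> X -> I) one star :
  is_assoc_scheme r one star -> forall h f g a b, r a b = h ->
  inum r h f g = #|[set z | (r a z == f) && (r z b == g)]|.
Proof.
move=> H h f g a b Hab; rewrite /inum.
case: pickP => [p /eqP Hp|Hn]; last by have := Hn (a, b); rewrite /= Hab eqxx.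
by case: H => _ _ _ Hr; exact: (Hr f g h _ _ _ _ Hp Hab).
Qed.


Lemma valE (X I : finType) (r : X -> X -> I) one star :
  is_assoc_scheme r one star -> forall g a,
  valency r one star g = \sum_z (r a z == g : nat).
Proof.
move=> H g a; have [_ Ho Hst _] := H.
have Haa : r a a = one by apply/eqP; rewrite Ho.
rewrite /valency (inumE H _ _ Haa).
rewrite card_sumP; apply: eq_bigr => z _.
rewrite (Hst a z) (inj_eq (can_inj (starK H))).
by case: eqP.
Qed.

Definition Cf (X I : finType) (r : X -> X -> I) a s v b : nat :=
  \sum_(z | r a z == s) (r z b == v : nat).
Definition Df (X I : finType) (r : X -> X -> I) v z z' : nat :=
  \sum_b ((r z b == v) * (r z' b == v))%N.
Definition Tf (X I : finType) (r : X -> X -> I) a s v : nat :=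
  \sum_(z | r a z == s) \sum_(z' | (r a z' == s) && (z' != z)) Df r v z z'.

Lemma S1 (X I : finType) (r : X -> X -> I) one star :
  is_assoc_scheme r one star -> forall a s v,
  \sum_b Cf r a s v b = (valency r one star s * valency r one star v)%N.
Proof.
move=> H a s v; rewrite /Cf exchange_big /=.
rewrite (valE H s a) big_distrl /= big_mkcond /=; apply: eq_bigr => z _.
by case: eqP; rewrite ?mul1n ?mul0n // (valE H v z).
Qed.

Lemma S6 (X I : finType) (r : X -> X -> I) one star :
  is_assoc_scheme r one star -> forall a s v,
  \sum_b (Cf r a s v b * Cf r a s v b)%N = (\sum_b Cf r a s v b + Tf r a s v)%N.
Proof.
move=> H a s v.
have -> : \sum_b (Cf r a s v b * Cf r a s v b)%N =
   \sum_(z | r a z == s) \sum_(z' | r a z' == s) Df r v z z'.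
  rewrite /Cf /Df.
  under eq_bigr => b _ do rewrite big_distrl /=.
  rewrite exchange_big /=; apply: eq_bigr => z _.
  under eq_bigr => b _ do rewrite big_distrr /=.
  by rewrite exchange_big.
have -> : \sum_b Cf r a s v b = \sum_(z | r a z == s) Df r v z z.
  rewrite /Cf exchange_big /=; apply: eq_bigr => z _; apply: eq_bigr => b _.
  by case: (r z b == v).
rewrite /Tf -big_split /=.
apply: eq_bigr => z Hz.
by rewrite (bigD1 z) //=.
Qed.

Lemma DfE (X I : finType) (r : X -> X -> I) one star :
  is_assoc_scheme r one star -> forall v z z',
  Df r v z z' = inum r (r z z') v (star v).
Proof.
move=> H v z z'; rewrite (inumE H _ _ (erefl (r z z'))) card_sumP /Df.
apply: eq_bigr => b _; have [_ _ Hst _] := H.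
rewrite (Hst z' b) (inj_eq (can_inj (starK H))).

by case: (r z b == v); case: (r z' b == v).
Qed.

Lemma S7 (X I : finType) (r : X -> X -> I) one star :
  is_assoc_scheme r one star -> forall a s,
  \sum_v Tf r a s v = \sum_(z | r a z == s) \sum_(z' | (r a z' == s) && (z' != z))
       indist r star (r z z').
Proof.
move=> H a s; rewrite /Tf exchange_big /=; apply: eq_bigr => z _.
rewrite exchange_big /=; apply: eq_bigr => z' _.
by rewrite /indist; apply: eq_bigr => v _; rewrite (DfE H).
Qed.

Local Open Scope ring_scope.

Lemma final_arith (R : realFieldType) (m L K d1 d1' d2' c : R) :
 0 < d1 -> d1 <= d1' -> 0 < d2' -> 0 < c -> 2 <= L -> 0 < K -> L < (d1 ^+ 2 / d1') * K ->
 2 * (d1' / d1) ^+ 3 * d2' * (c / (L - 1)) + 2 <= m + 2 ->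
 m * ((L - 1) * ((d1 * K) * (d1 * K)) - L ^+ 2 / 4 * (d1' * K))
   <= d1' * K * (d1' * K * (d2' * c)) -> False.
Proof.
move=> d1p d1le d2p cp L2 Kp HL Hm Hmain.
have d1'p : 0 < d1' by apply: lt_le_trans d1le.
set E := d1' / d1.
have Ed : d1' = E * d1 by rewrite /E mulrVK // unitfE gt_eqF.
have E1 : 1 <= E by rewrite /E ler_pdivlMr // mul1r.
have HL' : L * d1' < d1 ^+ 2 * K.
  by move: HL; rewrite mulrAC ltr_pdivlMr.
have L1 : 0 < L - 1 by lra.
have Hm' : 2 * E ^+ 3 * d2' * c <= m * (L - 1).
  move: Hm; rewrite lerD2r => Hm.
  have := ler_wpM2r (ltW L1) Hm; rewrite -!mulrA mulVf ?gt_eqF // mulr1.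
  by move=> h; exact: h.
have mp : 0 < m.
  have : 0 < 2 * E ^+ 3 * d2' * c.
    have Ep : 0 < E by apply: lt_le_trans E1.
    by do 3 (apply: mulr_gt0 => //); apply: exprn_gt0.
  move=> h; have h2 := lt_le_trans h Hm'. by rewrite pmulr_lgt0 in h2.
have Hb : (L - 1) / 2 * (d1 ^+ 2 * K ^+ 2) <
   (L - 1) * ((d1 * K) * (d1 * K)) - L ^+ 2 / 4 * (d1' * K).
  have LK : 0 < L * K by apply: mulr_gt0 => //; lra.
  have h1 : L * d1' * (L * K) < d1 ^+ 2 * K * (L * K) by rewrite ltr_pM2r.
  have h2 : 0 <= (L - 2) * (d1 ^+ 2 * K ^+ 2).
    apply: mulr_ge0; first lra. apply: mulr_ge0; apply: sqr_ge0.
  nra.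
have H1 : m * ((L - 1) / 2 * (d1 ^+ 2 * K ^+ 2)) < d1' * K * (d1' * K * (d2' * c)).
  apply: lt_le_trans Hmain; rewrite ltr_pM2l //.
have H2 : E ^+ 3 * d2' * c * (d1 ^+ 2 * K ^+ 2) <= m * ((L - 1) / 2 * (d1 ^+ 2 * K ^+ 2)).
  have q : 0 <= d1 ^+ 2 * K ^+ 2 by apply: mulr_ge0; apply: sqr_ge0.
  nra.
have H3 : d1' * K * (d1' * K * (d2' * c)) <= E ^+ 3 * d2' * c * (d1 ^+ 2 * K ^+ 2).
  rewrite Ed.
  have Z : 0 <= d2' * c * d1 ^+ 2 * K ^+ 2.
    apply: mulr_ge0; last exact: sqr_ge0.
    apply: mulr_ge0; last exact: sqr_ge0. apply: mulr_ge0; lra.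
  have EE : E ^+ 2 <= E ^+ 3.
    rewrite [X in _ <= X]exprS; have : 0 <= E ^+ 2 by apply: sqr_ge0. nra.
  have : E ^+ 2 * (d2' * c * d1 ^+ 2 * K ^+ 2) <= E ^+ 3 * (d2' * c * d1 ^+ 2 * K ^+ 2).
    by apply: ler_wpM2r.
  move=> h.
  have -> : E * d1 * K * (E * d1 * K * (d2' * c)) = E ^+ 2 * (d2' * c * d1 ^+ 2 * K ^+ 2) by ring.
  have -> : E ^+ 3 * d2' * c * (d1 ^+ 2 * K ^+ 2) = E ^+ 3 * (d2' * c * d1 ^+ 2 * K ^+ 2) by ring.
  exact: h.
lra.
Qed.

Lemma TfR (R : realFieldType) (X I : finType) (r : X -> X -> I) one star :
  is_assoc_scheme r one star -> forall a s v,
  (Tf r a s v)%:R = \sum_b ((Cf r a s v b)%:R ^+ 2 - (Cf r a s v b)%:R) :> R.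
Proof.
move=> H a s v; rewrite sumrB.
have := congr1 (fun n : nat => n%:R : R) (S6 H a s v).
rewrite /= natrD !natr_sum => h.
have -> : \sum_b (Cf r a s v b)%:R ^+ 2 = \sum_b ((Cf r a s v b * Cf r a s v b)%N)%:R :> R.
  by apply: eq_bigr => b _; rewrite natrM expr2.
by rewrite h addrAC subrr add0r.
Qed.

Lemma CfE (X I : finType) (r : X -> X -> I) one star :
  is_assoc_scheme r one star -> forall a s v b,
  inum r (r a b) s v = Cf r a s v b.
Proof.
move=> H a s v b; rewrite (inumE H _ _ (erefl (r a b))) card_sumP /Cf.
rewrite [RHS]big_mkcond /=; apply: eq_bigr => z _; by case: (r a z == s).
Qed.

Lemma Cf_a (X I : finType) (r : X -> X -> I) one star :
  is_assoc_scheme r one star -> forall a s v, v != star s -> Cf r a s v a = 0%N.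
Proof.
move=> H a s v Hv; rewrite /Cf big1 // => z /eqP Hz.
have [_ _ Hst _] := H.
by rewrite (Hst a z) Hz eq_sym (negbTE Hv).
Qed.

Lemma sum_sub_le (R : realFieldType) (T : finType) (P Q : pred T) (F : T -> R) :
  (forall i, 0 <= F i) -> (forall i, P i -> Q i) ->
  \sum_(i | P i) F i <= \sum_(i | Q i) F i.
Proof.
move=> F0 PQ; rewrite [X in _ <= X]big_mkcond [X in X <= _]big_mkcond.
apply: ler_sum => i _; case: ifP => Pi; first by rewrite (PQ i Pi).
by case: ifP.
Qed.

Lemma sum_const_pred (R : realFieldType) (T : finType) (P : pred T) (x : R) :
  \sum_(i | P i) x = (\sum_i (P i : nat))%:R * x.
Proof.
rewrite natr_sum mulr_suml big_mkcond /=; apply: eq_bigr => i _.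
by case: (P i); rewrite ?mul1r ?mul0r.
Qed.

Lemma perv (R : realFieldType) (X I : finType) (r : X -> X -> I) one star
  (l k : nat) (d1' : R) a s v :
  is_assoc_scheme r one star ->
  v != star s -> 0 <= d1' * k%:R ->
  (forall g, g != one -> (valency r one star g)%:R <= d1' * k%:R) ->
  ~ (exists w w', [&& w != one, w' != one & w != w'] /\
       [/\ (0 < inum r w s v)%N, (inum r w s v <= inum r w' s v)%N &
           (inum r w' s v < l)%N]) ->
  (l%:R - 1) * (valency r one star s * valency r one star v)%:R
     - l%:R ^+ 2 / 4 * (d1' * k%:R) <= (Tf r a s v)%:R.
Proof.
move=> H Hv dk Hval Hno.
have [_ Ho Hst _] := H.
set C := Cf r a s v.
set Bs := [set b | (0 < C b < l)%N].
have Cone : forall b, (0 < C b)%N -> r a b != one.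
  move=> b Cb; apply/negP => /eqP hb; move: hb => /eqP; rewrite Ho => /eqP hb.
  by move: Cb; rewrite /C hb (Cf_a H) ?ltnn.
have Bsame : forall b b', b \in Bs -> b' \in Bs -> r a b = r a b'.
  move=> b b'; rewrite !inE => /andP [hb1 hb2] /andP [hb1' hb2'].
  case: (eqVneq (r a b) (r a b')) => // hne; exfalso; apply: Hno.
  have [le|lt] := leqP (C b) (C b').
    exists (r a b), (r a b'); rewrite !(CfE H); split.
      by rewrite (Cone _ hb1) (Cone _ hb1') hne.
    by split.
  exists (r a b'), (r a b); rewrite !(CfE H); split.
    by rewrite (Cone _ hb1) (Cone _ hb1') eq_sym hne.
  by split => //; exact: ltnW.
have cardB : (#|Bs|)%:R <= d1' * k%:R :> R.
  have [->|[b0 Hb0]] := set_0Vmem Bs; first by rewrite cards0.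
  apply: le_trans (Hval (r a b0) _); last first.
    by apply: Cone; move: Hb0; rewrite inE => /andP [].
  rewrite ler_nat (valE H _ a) -card_sumP; apply: subset_leq_card.
  by apply/subsetP => b hb; rewrite inE (Bsame _ _ hb Hb0).
have per : forall b, (l%:R - 1) * (C b)%:R - (b \in Bs)%:R * (l%:R ^+ 2 / 4)
    <= (C b)%:R ^+ 2 - (C b)%:R :> R.
  move=> b; rewrite inE; case: (ltnP 0 (C b)) => hc /=.
    case: (ltnP (C b) l) => hl /=.
      rewrite mul1r; set x := (C b)%:R; set L := l%:R.
      have : 0 <= (x - L / 2) ^+ 2 by apply: sqr_ge0.
      move=> h; have e : (x - L / 2) ^+ 2 = x ^+ 2 - x * L + L ^+ 2 / 4 by field.
      rewrite e in h; lra.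
    rewrite mul0r subr0; set x := (C b)%:R; set L := l%:R.
    have hL : L <= x by rewrite ler_nat.
    have hx : 0 <= x by apply: ler0n.
    nra.
  by move: hc; rewrite leqn0 => /eqP ->; rewrite mul0r !mulr0 subr0 expr2 mul0r subr0.
rewrite (TfR _ H).
have := ler_sum (index_enum X) (P := fun _ => true) (fun b _ => per b).
rewrite sumrB -mulr_sumr -mulr_suml -natr_sum.
have -> : \sum_(i <- index_enum X | true) (i \in Bs)%:R = (#|Bs|)%:R :> R.
  by rewrite -natr_sum -card_sumP; congr (_%:R); apply: eq_card => b; rewrite !inE.
rewrite /C (S1 H a s v) => h; apply: le_trans h.
rewrite lerD2l lerN2.
rewrite [X in X <= _]mulrC; apply: ler_wpM2l => //.
apply: divr_ge0; [exact: sqr_ge0 | lra].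
Qed.

Lemma sum_const_pred1 (R : realFieldType) (T : finType) (P : pred T) (x : R) :
  \sum_(i | P i) x = (\sum_(i | P i) 1%N)%:R * x.
Proof. by rewrite natr_sum mulr_suml; apply: eq_bigr => i _; rewrite mul1r. Qed.

Lemma Tbound (R : realFieldType) (X I : finType) (r : X -> X -> I) one star
  (q : R) a s :
  is_assoc_scheme r one star -> 0 <= q ->
  (forall g, g != one -> (indist r star g)%:R <= q) ->
  \sum_v (Tf r a s v)%:R <= (valency r one star s)%:R * ((valency r one star s)%:R * q).
Proof.
move=> H q0 Hq; have [_ Ho _ _] := H.
rewrite -natr_sum (S7 H) natr_sum.
have -> : (valency r one star s)%:R * ((valency r one star s)%:R * q) =
   \sum_(z | r a z == s) ((valency r one star s)%:R * q).
  rewrite sum_const_pred1 (valE H s a) big_mkcond /=.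
  by congr (_%:R * _); rewrite [RHS]big_mkcond; apply: eq_bigr => z _; case: (r a z == s).
apply: ler_sum => z _; rewrite natr_sum.
apply: (@le_trans _ _ (\sum_(z' | (r a z' == s) && (z' != z)) q)).
  apply: ler_sum => z' /andP [_ hz']; apply: Hq.
  by rewrite Ho eq_sym.
apply: le_trans (sum_sub_le (Q := fun z' => r a z' == s) _ _) _ => //.
  by move=> i /andP [].
rewrite sum_const_pred1 (valE H s a) big_mkcond /=; apply: ler_wpM2r => //.
Qed.

Unset Implicit Arguments. Set Strict Implicit.
Theorem theorem1p3 (R : realFieldType) (X I : finType) (r : X -> X -> I)
    (one : I) (star : I -> I) (c k l : nat) (d1 d1' d2' : R) :
  is_assoc_scheme r one star ->
  0 < d1 <= 1 -> 0 < d1' <= 1 -> 0 < d2' <= 1 ->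
  (1 < l)%N -> l%:R < (d1 ^+ 2 / d1') * k%:R ->
  (forall g : I, g != one ->
     d1 * k%:R <= (valency r one star g)%:R <= d1' * k%:R /\
     (indist r star g)%:R <= d2' * c%:R) ->
  2 * (d1' / d1) ^+ 3 * d2' * (c%:R / (l%:R - 1)) + 2 <= (#|I|)%:R ->
  exists u v w w' : I,
    [/\ [&& u != one, v != one, w != one & w' != one],
        (u != v) && (w != w'),
        (0 < inum r w (star u) v)%N,
        (inum r w (star u) v <= inum r w' (star u) v)%N &
        (inum r w' (star u) v < l)%N].
Proof.
move=> H /andP[d1p d1le] /andP[d1'p d1'le] /andP[d2p d2le] Hl Hlk Hbd Hcard.
have [Hsurj Ho Hst Hreg] := H.
have sK := starK H.
have L2 : 2 <= l%:R :> R by rewrite (ler_nat R 2 l).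
have L1 : 0 < l%:R - 1 :> R by lra.
have P0 : 0 <= 2 * (d1' / d1) ^+ 3 * d2' * (c%:R / (l%:R - 1)).
  apply: mulr_ge0; last by apply: divr_ge0; [exact: ler0n | lra].
  apply: mulr_ge0; last lra.
  apply: mulr_ge0; first lra.
  by apply: exprn_ge0; apply: divr_ge0; lra.
have [s Hs] : exists s, s != one.
  case: (pickP (fun i => i != one)) => [s Hs|Hn]; first by exists s.
  exfalso; have c1 : #|I| = 1%N.
    rewrite -(card1 one); apply: eq_card => i; rewrite !inE.
    by move: (Hn i) => /negbFE ->.
  by move: Hcard; rewrite c1; lra.
have [a [a' _]] := Hsurj one.
have starone : star one = one.
  by have := Hst a a; move: (Ho a a); rewrite eqxx => /eqP ->.
have Hss : star s != one.
  by apply: contra Hs => /eqP h; rewrite -(sK s) h starone.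
have Kp : 0 < k%:R :> R.
  move: Hlk; case: (posnP k) => [->|kp]; last by rewrite ltr0n.
  by rewrite mulr0 => h; lra.
have [/andP [Hs1 Hs2] _] := Hbd s Hs.
have d1d1' : d1 <= d1'.
  by rewrite -(ler_pM2r Kp); apply: le_trans Hs2.
have dk : 0 <= d1' * k%:R by apply: mulr_ge0; lra.
have Hval : forall g, g != one -> (valency r one star g)%:R <= d1' * k%:R.
  by move=> g hg; have [/andP [_ ->] _] := Hbd g hg.
have Hind : forall g, g != one -> (indist r star g)%:R <= d2' * c%:R.
  by move=> g hg; have [_ ->] := Hbd g hg.
have q0 : 0 <= d2' * c%:R by apply: mulr_ge0; [lra | exact: ler0n].
have TB := Tbound a s H q0 Hind.
set ns := valency r one star s in Hs1 Hs2 TB.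
case: (posnP c) => [c0|cp].
  exfalso.
  have T0 : (Tf r a s (star s))%:R <= 0 :> R.
    apply: le_trans (_ : \sum_v (Tf r a s v)%:R <= _).
      have -> : (Tf r a s (star s))%:R = \sum_(v | v == star s) (Tf r a s v)%:R :> R by rewrite big_pred1_eq.
      apply: sum_sub_le => // v; exact: ler0n.
    by apply: le_trans TB _; rewrite c0 mulr0 !mulr0.
  have Ca : Cf r a s (star s) a = ns.
    rewrite /ns (valE H s a) /Cf big_mkcond /=; apply: eq_bigr => z _.
    by case: eqP => // hz; rewrite (Hst a z) hz eqxx.
  have Tge : (ns%:R ^+ 2 - ns%:R) <= (Tf r a s (star s))%:R :> R.
    rewrite (TfR _ H) (bigD1 a) //= Ca lerDl.
    apply: sumr_ge0 => b _; set x := Cf r a s (star s) b.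
    case: (posnP x) => [->|xp]; first by rewrite expr2 !mulr0n mul0r subrr.
    have : 1 <= x%:R :> R by rewrite ler1n.
    move=> h; nra.
  have nsp : 0 < ns%:R :> R by apply: lt_le_trans Hs1; apply: mulr_gt0.
  have ns1 : ns%:R <= 1 :> R by nra.
  have HL' : l%:R * d1' < d1 ^+ 2 * k%:R.
    by move: Hlk; rewrite mulrAC ltr_pdivlMr.
  have : d1 ^+ 2 * k%:R <= d1 by rewrite expr2 -mulrA; nra.
  nra.
apply: NNPP => Hno.
pose P := fun v => (v != one) && (v != star s).
set beta := (l%:R - 1) * ((d1 * k%:R) * (d1 * k%:R)) - l%:R ^+ 2 / 4 * (d1' * k%:R).
have Hper : forall v, P v -> beta <= (Tf r a s v)%:R.
  move=> v /andP [hv1 hv2].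
  have Hno' : ~ (exists w w', [&& w != one, w' != one & w != w'] /\
       [/\ (0 < inum r w s v)%N, (inum r w s v <= inum r w' s v)%N &
           (inum r w' s v < l)%N]).
    move=> [w [w' [/and3P [h1 h2 h3] h4]]]; apply: Hno.
    exists (star s), v, w, w'; rewrite sK.
    by case: h4 => h4 h5 h6; split => //; rewrite ?Hss ?hv1 ?h1 ?h2 ?h3 // eq_sym hv2.
  apply: le_trans (perv a H hv2 dk Hval Hno').
  rewrite lerD2r; apply: ler_wpM2l; first lra.
  have [/andP [hv3 _] _] := Hbd v hv1.
  rewrite natrM; apply: ler_pM => //; apply: mulr_ge0; lra.
have Hsum : \sum_(v | P v) beta <= d1' * k%:R * (d1' * k%:R * (d2' * c%:R)).
  apply: le_trans (ler_sum _ Hper) _.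
  apply: (le_trans (sum_sub_le (Q := xpredT) (fun v => ler0n _ _) (fun _ _ => isT))).
  apply: le_trans TB _.
  have ns0 : 0 <= ns%:R :> R by exact: ler0n.
  apply: ler_pM => //; first by apply: mulr_ge0.
  by apply: ler_wpM2r.
rewrite sum_const_pred1 in Hsum.
have cardI : #|I| = ((\sum_(v | P v) 1) + 2)%N.
  rewrite -sum1_card (bigD1 one) //= (bigD1 (star s)) //=.
  rewrite addnA addnC; congr (_ + _)%N.
rewrite cardI natrD in Hcard.
apply: (final_arith d1p d1d1' d2p _ L2 Kp Hlk Hcard Hsum).
by rewrite ltr0n.
Qed.
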